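(* Let $X$, $\mu$ be as in the context, under the standing assumptions. For $s\in\mathbb R$ and $r>0$ let $S_r(s)=\sup\sum_i\mu(B(x_i,r))^s$, where the supremum is over all families of pairwise disjoint closed balls $B(x_i,r)$ of radius $r$ with centers $x_i\in X$. Then for every $s\in\mathbb R$, $$\underline\tau_\mu(s):=\liminf_{r\to0}\frac{\log S_r(s)}{\log r}=\min\{\beta_1(s),\beta_2(s)\},\qquad \overline\tau_\mu(s):=\limsup_{r\to0}\frac{\log S_r(s)}{\log r}=\max\{\beta_1(s),\beta_2(s)\}.$$
   Context: Let $\mathcal A=\{0,1\}$. Fix real numbers $A>B>2$, real numbers $p,q$ with $0<p,q\le 1/2$, and a strictly increasing sequence of integers $\mathcal N=(N_i)_{i\ge 0}$ with $N_0=0$. For $n\ge 1$, call $n$ of type A if $N_{2i}<n\le N_{2i+1}$ for some $i\ge 0$, and of type B if $N_{2i+1}<n\le N_{2i+2}$ for some $i\ge0$; put $(r_n,\rho_n)=(A,p)$ if $n$ is of type A and $(r_n,\rho_n)=(B,q)$ if $n$ is of type B. Define closed intervals $I_w$, $w\in\mathcal A^n$, recursively: $I_\emptyset=[0,1]$, and if $w\in\mathcal A^{n-1}$ and $I_w=[x_w,x_w+\ell]$ then $I_{w0}=[x_w,x_w+\ell/r_n]$ and $I_{w1}=[x_w+\ell-\ell/r_n,\,x_w+\ell]$. Let $X=\bigcap_{n\ge1}\bigcup_{w\in\mathcal A^n}I_w$. Let $\mu$ be the unique Borel probability measure on $X$ with $\mu(I_\emptyset)=1$ and, for $w\in\mathcal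 A^{n-1}$, $\mu(I_{w0})=\rho_n\mu(I_w)$, $\mu(I_{w1})=(1-\rho_n)\mu(I_w)$. Standing assumptions: $\lim_{i\to\infty}N_{i+1}/N_i=\infty$ and $-\frac{\log p}{\log A}<-\frac{\log(1-q)}{\log B}$. Define $\beta_1(s)=-\frac{\log(p^s+(1-p)^s)}{\log A}$ and $\beta_2(s)=-\frac{\log(q^s+(1-q)^s)}{\log B}$. *)

(* Defs.v *)
From Stdlib Require Import Reals Lra Lia List Classical ClassicalEpsilon.
Import ListNotations.
Open Scope R_scope.

(** Generic supremum / infimum of a set of reals (chosen via Hilbert epsilon;
    meaningful when the set is nonempty and bounded). *)
Definition Rsup (P : R -> Prop) : R := epsilon (inhabits 0) (fun m => is_lub P m).
Definition Rinf (P : R -> Prop) : R := - Rsup (fun x => P (- x)).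

Definition typeA (N : nat -> nat) (n : nat) : Prop :=
  exists i : nat, (N (2 * i) < n <= N (2 * i + 1))%nat.

Definition ratio (A B : R) (N : nat -> nat) (n : nat) : R :=
  if excluded_middle_informative (typeA N n) then A else B.
Definition weight (p q : R) (N : nat -> nat) (n : nat) : R :=
  if excluded_middle_informative (typeA N n) then p else q.

(** Words of length n over {0,1} (false = 0, true = 1); the head of the list
    is the first letter (level 1). *)
Fixpoint words (n : nat) : list (list bool) :=
  match n with
  | O => [nil]
  | S n' => flat_map (fun w => [false :: w; true :: w]) (words n')
  end.

(** Interval I_w = [x, x + l], returned as the pair (x, l); the letters of w
    are processed at levels k, k+1, ... starting from interval [x, x+l]. *)
Fixpoint interval_aux (A B : R) (N : nat -> nat) (k : nat) (x l : R)
    (w : list bool) : R * R :=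
  match w with
  | nil => (x, l)
  | b :: w' =>
      let l' := l / ratio A B N k in
      interval_aux A B N (S k) (if b then x + l - l' else x) l' w'
  end.
Definition interval (A B : R) (N : nat -> nat) (w : list bool) : R * R :=
  interval_aux A B N 1 0 1 w.

Fixpoint mass_aux (p q : R) (N : nat -> nat) (k : nat) (w : list bool) : R :=
  match w with
  | nil => 1
  | b :: w' =>
      (if b then 1 - weight p q N k else weight p q N k) * mass_aux p q N (S k) w'
  end.
Definition mass (p q : R) (N : nat -> nat) (w : list bool) : R :=
  mass_aux p q N 1 w.

Definition inX (A B : R) (N : nat -> nat) (x : R) : Prop :=
  forall n : nat, exists w : list bool, length w = n /\
    fst (interval A B N w) <= x <= fst (interval A B N w) + snd (interval A B N w).

Definition ball_approx (A B p q : R) (N : nat -> nat) (n : nat) (c r : R) : R :=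
  fold_right Rplus 0
    (map (fun w =>
            let x := fst (interval A B N w) in
            let l := snd (interval A B N w) in
            if Rle_dec x (c + r) then
              if Rle_dec (c - r) (x + l) then mass p q N w else 0
            else 0)
         (words n)).

(** mu(B(c,r)): the level-n covers decrease to B(c,r) /\ X (a compact set),
    so mu(B(c,r)) is the infimum over n of their masses. *)
Definition mu_ball (A B p q : R) (N : nat -> nat) (c r : R) : R :=
  Rinf (fun v => exists n : nat, v = ball_approx A B p q N n c r).

(** S_r(s): sup over families of pairwise disjoint closed balls of radius r
    centred in X (such families are finite, given as lists of centres). *)
Definition S_r (A B p q : R) (N : nat -> nat) (r s : R) : R :=
  Rsup (fun v => exists cs : list R,
          (forall c, In c cs -> inX A B N c) /\
          ForallOrdPairs (fun x y => 2 * r < Rabs (x - y)) cs /\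
          v = fold_right Rplus 0 (map (fun c => Rpower (mu_ball A B p q N c r) s) cs)).

Definition is_liminf0 (f : R -> R) (L : R) : Prop :=
  (forall eps, 0 < eps -> exists delta, 0 < delta /\
      forall r, 0 < r < delta -> L - eps < f r) /\
  (forall eps, 0 < eps -> forall delta, 0 < delta ->
      exists r, 0 < r < delta /\ f r < L + eps).
Definition is_limsup0 (f : R -> R) (L : R) : Prop :=
  (forall eps, 0 < eps -> exists delta, 0 < delta /\
      forall r, 0 < r < delta -> f r < L + eps) /\
  (forall eps, 0 < eps -> forall delta, 0 < delta ->
      exists r, 0 < r < delta /\ L - eps < f r).

Definition beta (r rho s : R) : R :=
  - ln (Rpower rho s + Rpower (1 - rho) s) / ln r.

(* Main.v *)
Require Import Defs.
From Stdlib Require Import Reals Lra Lia List Bool Classical ClassicalEpsilon.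
Import ListNotations.
Open Scope R_scope.

Lemma exp_le_m : forall x y, x <= y -> exp x <= exp y.
Proof. intros x y H; destruct (Rle_lt_or_eq_dec _ _ H) as [h|h].
  left; apply exp_increasing; auto. rewrite h; lra. Qed.

Lemma ln_le_m : forall x y, 0 < x -> x <= y -> ln x <= ln y.
Proof. intros x y Hx H; destruct (Rle_lt_or_eq_dec _ _ H) as [h|h].
  left; apply ln_increasing; auto. rewrite h; lra. Qed.

Lemma Rsup_spec : forall P : R -> Prop, (exists x, P x) ->
  (exists M, forall x, P x -> x <= M) -> is_lub P (Rsup P).
Proof.
  intros P [x Hx] [M HM]. unfold Rsup. apply epsilon_spec.
  destruct (completeness P) as [m Hm]. exists M; intros y Hy; auto.
  exists x; auto. exists m; auto.
Qed.

Lemma Rsup_le : forall P M, (exists x, P x) -> (forall x, P x -> x <= M) -> Rsup P <= M.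
Proof. intros P M Hne HM. destruct (Rsup_spec P Hne (ex_intro _ M HM)) as [_ H].
  apply H. intros y Hy; auto. Qed.

Lemma Rsup_ge : forall P v, P v -> (exists M, forall x, P x -> x <= M) -> v <= Rsup P.
Proof. intros P v Hv HM. destruct (Rsup_spec P (ex_intro _ v Hv) HM) as [H _].
  apply H; auto. Qed.

Lemma Rinf_ge : forall P m, (exists x, P x) -> (forall x, P x -> m <= x) -> m <= Rinf P.
Proof. intros P m [x Hx] H. unfold Rinf.
  assert (Rsup (fun y => P (- y)) <= - m).
  { apply Rsup_le. exists (-x). rewrite Ropp_involutive; auto.
    intros y Hy. specialize (H _ Hy). lra. }
  lra. Qed.

Lemma Rinf_le : forall P v m, P v -> (forall x, P x -> m <= x) -> Rinf P <= v.
Proof. intros P v m Hv H. unfold Rinf.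
  assert (- v <= Rsup (fun y => P (- y))).
  { apply Rsup_ge. rewrite Ropp_involutive; auto.
    exists (-m). intros y Hy. specialize (H _ Hy). lra. }
  lra. Qed.

Definition sumL {T} (f : T -> R) (l : list T) : R := fold_right Rplus 0 (map f l).

Lemma sumL_nil : forall T (f : T -> R), sumL f [] = 0.
Proof. reflexivity. Qed.
Lemma sumL_cons : forall T (f : T -> R) a l, sumL f (a :: l) = f a + sumL f l.
Proof. reflexivity. Qed.

Lemma sumL_app : forall T (f : T -> R) l1 l2, sumL f (l1 ++ l2) = sumL f l1 + sumL f l2.
Proof. intros T f l1 l2; induction l1; simpl. unfold sumL; simpl; lra.
  rewrite !sumL_cons, IHl1; lra. Qed.

Lemma sumL_map : forall T U (f : U -> R) (g : T -> U) l, sumL f (map g l) = sumL (fun x => f (g x)) l.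
Proof. intros; unfold sumL; rewrite map_map; reflexivity. Qed.

Lemma sumL_nonneg : forall T (f : T -> R) l, (forall x, In x l -> 0 <= f x) -> 0 <= sumL f l.
Proof. intros T f l H; induction l. rewrite sumL_nil; lra.
  rewrite sumL_cons. assert (0 <= f a) by (apply H; left; auto).
  assert (0 <= sumL f l) by (apply IHl; intros; apply H; right; auto). lra. Qed.

Lemma sumL_le : forall T (f g : T -> R) l, (forall x, In x l -> f x <= g x) -> sumL f l <= sumL g l.
Proof. intros T f g l H; induction l. rewrite !sumL_nil; lra.
  rewrite !sumL_cons. assert (f a <= g a) by (apply H; left; auto).
  assert (sumL f l <= sumL g l) by (apply IHl; intros; apply H; right; auto). lra. Qed.

Lemma sumL_ext : forall T (f g : T -> R) l, (forall x, In x l -> f x = g x) -> sumL f l = sumL g l.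
Proof. intros T f g l H; induction l. reflexivity.
  rewrite !sumL_cons, H, IHl; auto. intros; apply H; right; auto. left; auto. Qed.

Lemma sumL_scal : forall T (f : T -> R) c l, sumL (fun x => c * f x) l = c * sumL f l.
Proof. intros; induction l. rewrite !sumL_nil; lra. rewrite !sumL_cons, IHl; lra. Qed.

Lemma sumL_plus : forall T (f g : T -> R) l, sumL (fun x => f x + g x) l = sumL f l + sumL g l.
Proof. intros; induction l. rewrite !sumL_nil; lra. rewrite !sumL_cons, IHl; lra. Qed.

Lemma sumL_ge_term : forall T (f : T -> R) l a, (forall x, In x l -> 0 <= f x) -> In a l -> f a <= sumL f l.
Proof. intros T f l a H Ha; induction l. destruct Ha.
  rewrite sumL_cons. destruct Ha as [<-|Ha].
  assert (0 <= sumL f l) by (apply sumL_nonneg; intros; apply H; right; auto). lra.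
  assert (0 <= f a0) by (apply H; left; auto).
  assert (f a <= sumL f l) by (apply IHl; auto; intros; apply H; right; auto). lra. Qed.

Lemma sumL_zero : forall T (f : T -> R) l, (forall x, In x l -> f x = 0) -> sumL f l = 0.
Proof. intros T f l H; induction l. reflexivity. rewrite sumL_cons, H, IHl. lra.
  intros; apply H; right; auto. left; auto. Qed.

Lemma sumL_single : forall T (f : T -> R) l u, NoDup l -> (forall x, In x l -> x <> u -> f x = 0) ->
  0 <= f u -> sumL f l <= f u.
Proof. intros T f l u Hnd H Hu; induction l. rewrite sumL_nil; lra.
  inversion Hnd; subst. rewrite sumL_cons.
  destruct (classic (a = u)) as [->|Hne].
  rewrite sumL_zero. lra. intros x Hx. apply H. right; auto. intro; subst; contradiction.
  rewrite H. assert (sumL f l <= f u) by (apply IHl; auto; intros; apply H; auto; right; auto). lra.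
  left; auto. auto. Qed.

Lemma sumL_remove : forall (f : list bool -> R) L a, NoDup L -> In a L ->
  sumL f L = f a + sumL f (remove (list_eq_dec bool_dec) a L).
Proof. intros f L a Hnd Ha; induction L as [|b L IH]. destruct Ha.
  inversion Hnd; subst. simpl. destruct (list_eq_dec bool_dec a b) as [e|e].
  subst. rewrite notin_remove; auto.
  rewrite sumL_cons, sumL_cons. destruct Ha as [Ha|Ha]. subst; contradiction.
  rewrite IH; auto; lra. Qed.

Lemma NoDup_remove_b : forall L (a : list bool), NoDup L -> NoDup (remove (list_eq_dec bool_dec) a L).
Proof. intros L a H; induction H. constructor. simpl.
  destruct (list_eq_dec bool_dec a x); auto. constructor; auto.
  intro Hin. apply in_remove in Hin. tauto. Qed.

Lemma sumL_sub : forall (f : list bool -> R) l L, NoDup l -> NoDup L -> (forall x, In x l -> In x L) ->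
  (forall x, 0 <= f x) -> sumL f l <= sumL f L.
Proof. intros f l; induction l as [|a l IH]; intros L Hl HL Hincl Hf.
  rewrite sumL_nil. apply sumL_nonneg; auto.
  inversion Hl; subst. rewrite sumL_cons. rewrite (sumL_remove f L a); auto.
  2: apply Hincl; left; auto.
  assert (sumL f l <= sumL f (remove (list_eq_dec bool_dec) a L)); [|lra].
  apply IH; auto. apply NoDup_remove_b; auto.
  intros x Hx. apply in_in_remove. intro; subst; contradiction. apply Hincl; right; auto. Qed.
Lemma sumL_flat : forall (f : list bool -> R) l,
  sumL f (flat_map (fun w => [false :: w; true :: w]) l) = sumL (fun w => f (false :: w) + f (true :: w)) l.
Proof. intros f l; induction l. reflexivity. simpl flat_map. unfold sumL in *; simpl in *. rewrite IHl.
  lra. Qed.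

Lemma sumL_words_S : forall (f : list bool -> R) n,
  sumL f (words (S n)) = sumL (fun w => f (false :: w) + f (true :: w)) (words n).
Proof. intros; simpl words; apply sumL_flat. Qed.

Lemma words_In : forall n w, In w (words n) <-> length w = n.
Proof. induction n; intros w; simpl.
  split. intros [<-|[]]; auto. destruct w; simpl; try discriminate; auto.
  rewrite in_flat_map. split.
  intros [u [Hu Hw]]. apply IHn in Hu. simpl in Hw. destruct Hw as [<-|[<-|[]]]; simpl; auto.
  destruct w as [|b u]; simpl; try discriminate. intros H. injection H; intros Hu.
  exists u. split. apply IHn; auto. destruct b; simpl; auto. Qed.

Lemma words_NoDup : forall n, NoDup (words n).
Proof. induction n; simpl. constructor. simpl; auto. constructor.
  induction IHn; simpl. constructor.
  constructor. intro Hin. simpl in Hin. destruct Hin as [Hh|Hin]. discriminate.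
  apply in_flat_map in Hin. destruct Hin as [u [Hu Hx]]. simpl in Hx.
  destruct Hx as [Hx|[Hx|[]]]; try discriminate. injection Hx; intros; subst; contradiction.
  constructor. intro Hin. apply in_flat_map in Hin. destruct Hin as [u [Hu Hx]]. simpl in Hx.
  destruct Hx as [Hx|[Hx|[]]]; try discriminate. injection Hx; intros; subst; contradiction.
  auto. Qed.

Lemma sumL_words_app : forall n m (F : list bool -> R),
  sumL F (words (n + m)) = sumL (fun u => sumL (fun v => F (u ++ v)) (words m)) (words n).
Proof. induction n; intros m F. simpl words. rewrite sumL_cons, sumL_nil, Rplus_0_r. reflexivity.
  replace (S n + m)%nat with (S (n + m)) by lia. rewrite !sumL_words_S. rewrite sumL_plus.
  rewrite (IHn m (fun w => F (false :: w))), (IHn m (fun w => F (true :: w))).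
  rewrite <- sumL_plus. apply sumL_ext. intros u _. reflexivity. Qed.
Fixpoint sk (f : nat -> R) (k n : nat) : R :=
  match n with O => 0 | S n' => f k + sk f (S k) n' end.

Lemma sk_add : forall f n k m, sk f k (n + m) = sk f k n + sk f (k + n) m.
Proof. intros f n; induction n; intros k m; simpl. rewrite Nat.add_0_r; lra.
  rewrite IHn. replace (S k + n)%nat with (k + S n)%nat by lia. lra. Qed.

Lemma sk_bounds : forall f lo hi k n, (forall j, lo <= f j <= hi) ->
  INR n * lo <= sk f k n <= INR n * hi.
Proof. intros f lo hi k n H; revert k; induction n; intros k; simpl sk.
  simpl; lra. rewrite S_INR. specialize (IHn (S k)). specialize (H k). lra. Qed.

Lemma sk_ext : forall f g k n, (forall j, (k <= j < k + n)%nat -> f j = g j) -> sk f k n = sk g k n.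
Proof. intros f g k n; revert k; induction n; intros k H; simpl. auto.
  rewrite H by lia. rewrite IHn; auto. intros j Hj; apply H; lia. Qed.

Lemma rw_cases : forall A B p q N k,
  (ratio A B N k = A /\ weight p q N k = p /\ typeA N k) \/
  (ratio A B N k = B /\ weight p q N k = q /\ ~ typeA N k).
Proof. intros; unfold ratio, weight. destruct (excluded_middle_informative (typeA N k)); auto. Qed.

Lemma ratio_bd : forall A B N k, B < A -> B <= ratio A B N k <= A.
Proof. intros. destruct (rw_cases A B 0 0 N k) as [[E _]|[E _]]; rewrite E; lra. Qed.

Lemma weight_bd : forall p q N k, 0 < p <= 1/2 -> 0 < q <= 1/2 ->
  Rmin p q <= weight p q N k <= 1/2.
Proof. intros. destruct (rw_cases 0 0 p q N k) as [[_ [E _]]|[_ [E _]]]; rewrite E.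
  split; [apply Rmin_l|lra]. split; [apply Rmin_r|lra]. Qed.

Lemma ia_snd : forall A B N k x l w, (forall j, 0 < ratio A B N j) ->
  snd (interval_aux A B N k x l w) = l * exp (- sk (fun j => ln (ratio A B N j)) k (length w)).
Proof. intros A B N k x l w Hr; revert k x l; induction w; intros k x l; simpl.
  rewrite Ropp_0, exp_0; lra.
  rewrite IHw. rewrite Ropp_plus_distr, exp_plus, (exp_Ropp (ln (ratio A B N k))), exp_ln by auto.
  unfold Rdiv; ring. Qed.

Lemma ia_app : forall A B N k x l u v,
  interval_aux A B N k x l (u ++ v) =
  interval_aux A B N (k + length u) (fst (interval_aux A B N k x l u)) (snd (interval_aux A B N k x l u)) v.
Proof. intros A B N k x l u v; revert k x l; induction u; intros k x l; simpl.
  rewrite Nat.add_0_r; auto. rewrite IHu. replace (S k + length u)%nat with (k + S (length u))%nat by lia.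
  auto. Qed.

Lemma ia_incl : forall A B N k x l w, (forall j, 2 <= ratio A B N j) -> 0 < l ->
  x <= fst (interval_aux A B N k x l w) /\
  fst (interval_aux A B N k x l w) + snd (interval_aux A B N k x l w) <= x + l /\
  0 < snd (interval_aux A B N k x l w).
Proof. intros A B N k x l w Hr; revert k x l; induction w; intros k x l Hl; simpl. lra.
  set (rk := ratio A B N k). set (l' := l / rk).
  assert (Hrk : 2 <= rk) by apply Hr.
  assert (H1 : 0 < l') by (unfold l'; apply Rdiv_lt_0_compat; lra).
  assert (H2 : l = rk * l') by (unfold l'; field; lra).
  destruct a.
  - destruct (IHw (S k) (x + l - l') l' H1) as [h1 [h2 h3]]. nra.
  - destruct (IHw (S k) x l' H1) as [h1 [h2 h3]]. nra.
Qed.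

Lemma ia_falses : forall A B N k x l j, fst (interval_aux A B N k x l (repeat false j)) = x.
Proof. intros A B N k x l j; revert k x l; induction j; intros; simpl; auto. Qed.

Lemma ia_sep : forall A B N k x l u v, 2 < B -> (forall j, B <= ratio A B N j) -> 0 < l ->
  length u = length v -> u <> v ->
  fst (interval_aux A B N k x l u) + (B - 1) * snd (interval_aux A B N k x l u) <= fst (interval_aux A B N k x l v) \/
  fst (interval_aux A B N k x l v) + (B - 1) * snd (interval_aux A B N k x l v) <= fst (interval_aux A B N k x l u).
Proof. intros A B N k x l u; revert k x l; induction u as [|a u IH]; intros k x l v hB Hr Hl Hlen Hne.
  destruct v; simpl in Hlen; try discriminate. contradiction.
  destruct v as [|b v]; simpl in Hlen; try discriminate. injection Hlen; intros Hlen'.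
  assert (Hr2 : forall j, 2 <= ratio A B N j) by (intros j; specialize (Hr j); lra).
  set (rk := ratio A B N k). set (l' := l / rk).
  assert (Hrk : B <= rk) by apply Hr.
  assert (H1 : 0 < l') by (unfold l'; apply Rdiv_lt_0_compat; lra).
  assert (H2 : l = rk * l') by (unfold l'; field; lra).
  destruct (bool_dec a b) as [e|e].
  - subst b. simpl. fold rk. fold l'. apply IH; auto. intro E; apply Hne; rewrite E; reflexivity.
  - simpl. fold rk. fold l'.
    destruct (ia_incl A B N (S k) (if a then x + l - l' else x) l' u Hr2 H1) as [a1 [a2 a3]].
    destruct (ia_incl A B N (S k) (if b then x + l - l' else x) l' v Hr2 H1) as [b1 [b2 b3]].
    destruct a, b; try contradiction.
    + right.
      assert ((B - 2) * snd (interval_aux A B N (S k) x l' v) <= (rk - 2) * l') .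
      { apply Rmult_le_compat; lra. }
      lra.
    + left.
      assert ((B - 2) * snd (interval_aux A B N (S k) x l' u) <= (rk - 2) * l') .
      { apply Rmult_le_compat; lra. }
      lra.
Qed.

Lemma mass_app : forall p q N k u v,
  mass_aux p q N k (u ++ v) = mass_aux p q N k u * mass_aux p q N (k + length u) v.
Proof. intros p q N k u v; revert k; induction u; intros k; simpl.
  rewrite Nat.add_0_r; ring. rewrite IHu. replace (S k + length u)%nat with (k + S (length u))%nat by lia. ring. Qed.

Lemma mass_bounds : forall p q N k w, 0 < p <= 1/2 -> 0 < q <= 1/2 ->
  Rmin p q ^ length w <= mass_aux p q N k w <= 1.
Proof. intros p q N k w hp hq; revert k; induction w; intros k; simpl. lra.
  destruct (IHw (S k)) as [h1 h2]. destruct (weight_bd p q N k hp hq) as [w1 w2].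
  assert (0 < Rmin p q <= 1/2) by (split; [apply Rmin_glb_lt; lra| pose proof (Rmin_l p q); lra]).
  assert (0 <= Rmin p q ^ length w) by (apply pow_le; lra).
  destruct a; split.
  - apply Rmult_le_compat; lra.
  - nra.
  - apply Rmult_le_compat; lra.
  - nra.
Qed.
Lemma mass_sum : forall p q N k n, sumL (mass_aux p q N k) (words n) = 1.
Proof. intros p q N k n; revert k; induction n; intros k.
  simpl. unfold sumL; simpl; lra.
  rewrite sumL_words_S. rewrite <- (IHn (S k)). apply sumL_ext; intros; simpl; ring. Qed.

Definition lz (p q : R) (N : nat -> nat) (s : R) (j : nat) : R :=
  ln (Rpower (weight p q N j) s + Rpower (1 - weight p q N j) s).

Lemma Z_eq : forall p q N s k n, 0 < p <= 1/2 -> 0 < q <= 1/2 ->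
  sumL (fun w => Rpower (mass_aux p q N k w) s) (words n) = exp (sk (lz p q N s) k n).
Proof. intros p q N s k n hp hq; revert k; induction n; intros k.
  simpl. unfold sumL; simpl. unfold Rpower; rewrite ln_1, Rmult_0_r, exp_0; lra.
  rewrite sumL_words_S. simpl sk. rewrite exp_plus. unfold lz at 1. rewrite exp_ln.
  2: { unfold Rpower. pose proof (exp_pos (s * ln (weight p q N k))). pose proof (exp_pos (s * ln (1 - weight p q N k))). lra. }
  rewrite <- IHn, <- sumL_scal. apply sumL_ext. intros w _. simpl mass_aux.
  destruct (weight_bd p q N k hp hq) as [w1 w2].
  assert (0 < Rmin p q) by (apply Rmin_glb_lt; lra).
  assert (0 < mass_aux p q N (S k) w).
  { destruct (mass_bounds p q N (S k) w hp hq). pose proof (pow_lt _ (length w) H). lra. }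
  rewrite <- !Rpower_mult_distr by lra. ring. Qed.

Definition lr (A B : R) (N : nat -> nat) (j : nat) : R := ln (ratio A B N j).

Lemma int_snd : forall A B N w, 0 < B -> B < A ->
  snd (interval A B N w) = exp (- sk (lr A B N) 1 (length w)).
Proof. intros. unfold interval. rewrite ia_snd. unfold lr; ring.
  intros j; destruct (ratio_bd A B N j); lra. Qed.

Lemma int_app : forall A B N u v,
  interval A B N (u ++ v) = interval_aux A B N (1 + length u) (fst (interval A B N u)) (snd (interval A B N u)) v.
Proof. intros; unfold interval; apply ia_app. Qed.

Lemma int_pos : forall A B N w, 2 < B -> B < A -> 0 < snd (interval A B N w).
Proof. intros; rewrite int_snd by lra; apply exp_pos. Qed.

Lemma int_sub : forall A B N u v, 2 < B -> B < A ->
  fst (interval A B N u) <= fst (interval A B N (u ++ v)) /\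
  fst (interval A B N (u ++ v)) + snd (interval A B N (u ++ v)) <= fst (interval A B N u) + snd (interval A B N u) /\
  0 < snd (interval A B N (u ++ v)).
Proof. intros. rewrite int_app. apply ia_incl. intros j; destruct (ratio_bd A B N j); lra.
  apply int_pos; auto. Qed.

Lemma int_sep : forall A B N u v, 2 < B -> B < A -> length u = length v -> u <> v ->
  fst (interval A B N u) + (B - 1) * snd (interval A B N u) <= fst (interval A B N v) \/
  fst (interval A B N v) + (B - 1) * snd (interval A B N v) <= fst (interval A B N u).
Proof. intros. unfold interval. apply ia_sep; auto. intros j; destruct (ratio_bd A B N j); lra. lra. Qed.

Lemma int_same_len : forall A B N u v, 0 < B -> B < A -> length u = length v ->
  snd (interval A B N u) = snd (interval A B N v).
Proof. intros. rewrite !int_snd by lra. rewrite H1; auto. Qed.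

Definition gf (A B p q : R) (N : nat -> nat) (c r : R) (w : list bool) : R :=
  let x := fst (interval A B N w) in
  let l := snd (interval A B N w) in
  if Rle_dec x (c + r) then if Rle_dec (c - r) (x + l) then mass p q N w else 0 else 0.

Lemma ba_eq : forall A B p q N n c r, ball_approx A B p q N n c r = sumL (gf A B p q N c r) (words n).
Proof. reflexivity. Qed.

Lemma mass_pos : forall p q N w, 0 < p <= 1/2 -> 0 < q <= 1/2 -> 0 < mass p q N w.
Proof. intros. unfold mass. destruct (mass_bounds p q N 1 w H H0).
  assert (0 < Rmin p q) by (apply Rmin_glb_lt; lra). pose proof (pow_lt _ (length w) H3). lra. Qed.

Lemma gf_bd : forall A B p q N c r w, 0 < p <= 1/2 -> 0 < q <= 1/2 ->
  0 <= gf A B p q N c r w <= mass p q N w.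
Proof. intros. pose proof (mass_pos p q N w H H0). unfold gf.
  destruct Rle_dec; [destruct Rle_dec|]; lra. Qed.

Lemma gf_meet : forall A B p q N c r w,
  fst (interval A B N w) <= c + r -> c - r <= fst (interval A B N w) + snd (interval A B N w) ->
  gf A B p q N c r w = mass p q N w.
Proof. intros. unfold gf. destruct Rle_dec; [destruct Rle_dec|]; auto; contradiction. Qed.

Lemma gf_far : forall A B p q N c r w,
  (c + r < fst (interval A B N w) \/ fst (interval A B N w) + snd (interval A B N w) < c - r) ->
  gf A B p q N c r w = 0.
Proof. intros. unfold gf. destruct Rle_dec; [destruct Rle_dec|]; auto; lra. Qed.

Lemma ba_lower : forall A B p q N c r v, 2 < B -> B < A -> 0 < p <= 1/2 -> 0 < q <= 1/2 ->
  c - r <= fst (interval A B N v) -> fst (interval A B N v) + snd (interval A B N v) <= c + r ->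
  forall n, mass p q N v <= ball_approx A B p q N n c r.
Proof. intros A B p q N c r v hB hAB hp hq H1 H2 n. rewrite ba_eq.
  assert (Hnn : forall w, 0 <= gf A B p q N c r w) by (intros; apply gf_bd; auto).
  destruct (Nat.le_gt_cases (length v) n) as [Hle|Hlt].
  - replace n with (length v + (n - length v))%nat by lia. rewrite sumL_words_app.
    eapply Rle_trans; [|apply sumL_ge_term with (a := v)].
    + apply Req_le. rewrite <- (Rmult_1_r (mass p q N v)).
      rewrite <- (mass_sum p q N (1 + length v) (n - length v)), <- sumL_scal.
      apply sumL_ext. intros t _. rewrite gf_meet. unfold mass; rewrite mass_app; auto.
      destruct (int_sub A B N v t hB hAB) as [a1 [a2 a3]]; lra.
      destruct (int_sub A B N v t hB hAB) as [a1 [a2 a3]]; lra.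
    + intros; apply sumL_nonneg; auto.
    + apply words_In; auto.
  - set (u := firstn n v).
    assert (Hv : v = u ++ skipn n v) by (unfold u; symmetry; apply firstn_skipn).
    assert (Hu : length u = n) by (unfold u; rewrite length_firstn; lia).
    eapply Rle_trans; [|apply sumL_ge_term with (a := u); auto].
    2: apply words_In; auto.
    destruct (int_sub A B N u (skipn n v) hB hAB) as [a1 [a2 a3]]. rewrite <- Hv in a1, a2, a3.
    rewrite gf_meet by lra. rewrite Hv at 1. unfold mass. rewrite mass_app.
    destruct (mass_bounds p q N (1 + length u) (skipn n v) hp hq).
    pose proof (mass_pos p q N u hp hq). unfold mass in H3. nra.
Qed.

Lemma ba_upper : forall A B p q N c r u n, 0 < p <= 1/2 -> 0 < q <= 1/2 -> length u = n ->
  (forall w, length w = n -> w <> u -> gf A B p q N c r w = 0) ->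
  ball_approx A B p q N n c r <= mass p q N u.
Proof. intros. rewrite ba_eq. eapply Rle_trans. apply (sumL_single _ _ _ u). apply words_NoDup.
  intros x Hx Hne. apply H2; auto. apply words_In; auto. apply gf_bd; auto. apply gf_bd; auto. Qed.

Lemma mu_lower : forall A B p q N c r v, 2 < B -> B < A -> 0 < p <= 1/2 -> 0 < q <= 1/2 ->
  c - r <= fst (interval A B N v) -> fst (interval A B N v) + snd (interval A B N v) <= c + r ->
  mass p q N v <= mu_ball A B p q N c r.
Proof. intros. unfold mu_ball. apply Rinf_ge. eexists; exists 0%nat; reflexivity.
  intros x [n ->]. apply ba_lower; auto. Qed.

Lemma mu_upper : forall A B p q N c r n, 0 < p <= 1/2 -> 0 < q <= 1/2 ->
  mu_ball A B p q N c r <= ball_approx A B p q N n c r.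
Proof. intros. unfold mu_ball. apply Rinf_le with 0. exists n; auto.
  intros x [m ->]. rewrite ba_eq. apply sumL_nonneg. intros; apply gf_bd; auto. Qed.
Definition ell (A B : R) (N : nat -> nat) (n : nat) : R := exp (- sk (lr A B N) 1 n).

Lemma int_snd' : forall A B N w, 0 < B -> B < A -> snd (interval A B N w) = ell A B N (length w).
Proof. intros; unfold ell; apply int_snd; auto. Qed.

Lemma pow_bound : forall x b L s, 0 < x -> 0 < b -> 0 <= L ->
  ln b - L <= ln x <= ln b + L ->
  exp (- (Rabs s * L)) * Rpower b s <= Rpower x s <= exp (Rabs s * L) * Rpower b s.
Proof. intros x b L s Hx Hb HL [H1 H2]. unfold Rpower. rewrite <- !exp_plus.
  assert (Rabs (s * ln x - s * ln b) <= Rabs s * L).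
  { replace (s * ln x - s * ln b) with (s * (ln x - ln b)) by ring. rewrite Rabs_mult.
    apply Rmult_le_compat_l. apply Rabs_pos. apply Rabs_le; lra. }
  pose proof (Rle_abs (s * ln x - s * ln b)). pose proof (Rle_abs (- (s * ln x - s * ln b))). rewrite Rabs_Ropp in H3. pose proof (Rabs_pos s).
  split; apply exp_le_m; lra. Qed.

Lemma ln_mass_app : forall p q N u v, 0 < p <= 1/2 -> 0 < q <= 1/2 ->
  ln (mass p q N u) - (- INR (length v) * ln (Rmin p q)) <= ln (mass p q N (u ++ v)) <= ln (mass p q N u).
Proof. intros p q N u v hp hq. replace (mass p q N (u ++ v)) with (mass p q N u * mass_aux p q N (1 + length u) v) by (unfold mass; rewrite mass_app; reflexivity).
  pose proof (mass_pos p q N u hp hq) as Hm.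
  destruct (mass_bounds p q N (1 + length u) v hp hq) as [m1 m2].
  assert (Hpi : 0 < Rmin p q) by (apply Rmin_glb_lt; lra). pose proof (pow_lt _ (length v) Hpi) as Hpw.
  rewrite ln_mult by lra.
  assert (ln (mass_aux p q N (1 + length u) v) <= 0) by (rewrite <- ln_1; apply ln_le_m; lra).
  assert (Hl : ln (Rmin p q ^ length v) <= ln (mass_aux p q N (1 + length u) v)) by (apply ln_le_m; lra).
  rewrite ln_pow in Hl by lra. lra. Qed.

Definition inI (A B : R) (N : nat -> nat) (w : list bool) (c : R) : Prop :=
  fst (interval A B N w) <= c <= fst (interval A B N w) + snd (interval A B N w).

Lemma inI_prefix : forall A B N u v c, 2 < B -> B < A -> inI A B N (u ++ v) c -> inI A B N u c.
Proof. intros A B N u v c hB hAB [h1 h2]. destruct (int_sub A B N u v hB hAB) as [a1 [a2 a3]].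
  split; lra. Qed.

Lemma sep_far : forall A B p q N u w c r, 2 < B -> B < A -> length u = length w -> w <> u ->
  inI A B N u c -> r < (B - 2) * ell A B N (length u) -> gf A B p q N c r w = 0.
Proof. intros A B p q N u w c r hB hAB Hl Hne [h1 h2] Hr. apply gf_far.
  assert (E1 : snd (interval A B N u) = ell A B N (length u)) by (apply int_snd'; lra).
  assert (E2 : snd (interval A B N w) = ell A B N (length u)) by (rewrite Hl; apply int_snd'; lra).
  destruct (int_sep A B N u w hB hAB Hl (fun e => Hne (eq_sym e))) as [H|H]; rewrite E1, E2 in *; lra. Qed.

Lemma mu_bounds1 : forall A B p q N c r w n0, 2 < B -> B < A -> 0 < p <= 1/2 -> 0 < q <= 1/2 ->
  inI A B N w c -> (n0 <= length w)%nat -> ell A B N (length w) <= r -> r < (B - 2) * ell A B N n0 ->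
  mass p q N w <= mu_ball A B p q N c r <= mass p q N (firstn n0 w).
Proof. intros A B p q N c r w n0 hB hAB hp hq Hc Hn H1 H2. split.
  - destruct Hc as [c1 c2]. rewrite int_snd' in c2 by lra. apply mu_lower; auto; try rewrite int_snd' by lra; lra.
  - eapply Rle_trans. apply mu_upper with (n := n0); auto.
    apply ba_upper; auto. rewrite length_firstn; lia.
    intros w' Hw' Hne. apply sep_far with (u := firstn n0 w); auto.
    rewrite length_firstn, Hw'; lia.
    apply inI_prefix with (skipn n0 w); auto. rewrite firstn_skipn; auto.
    rewrite length_firstn. replace (Init.Nat.min n0 (length w)) with n0 by lia. auto.
Qed.

Lemma mu_bounds2 : forall A B p q N r w D, 2 < B -> B < A -> 0 < p <= 1/2 -> 0 < q <= 1/2 ->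
  ell A B N (length w + D) <= r -> r < (B - 2) * ell A B N (length w) ->
  mass p q N (w ++ repeat false D) <= mu_ball A B p q N (fst (interval A B N w)) r <= mass p q N w.
Proof. intros A B p q N r w D hB hAB hp hq H1 H2.
  assert (Ef : fst (interval A B N (w ++ repeat false D)) = fst (interval A B N w)).
  { rewrite int_app. apply ia_falses. }
  assert (El : snd (interval A B N (w ++ repeat false D)) = ell A B N (length w + D)).
  { rewrite int_snd' by lra. rewrite length_app, repeat_length; auto. }
  split.
  - assert (0 < ell A B N (length w + D)) by apply exp_pos.
    apply mu_lower; auto; rewrite Ef; try rewrite El; lra.
  - eapply Rle_trans. apply mu_upper with (n := length w); auto.
    apply ba_upper; auto. intros w' Hw' Hne. apply sep_far with (u := w); auto.
    split. lra. pose proof (int_pos A B N w hB hAB); lra.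
Qed.
Lemma FOP_NoDup_map : forall (T U : Type) (Rl : T -> T -> Prop) (f : T -> U) l,
  ForallOrdPairs Rl l -> (forall x y, In x l -> In y l -> Rl x y -> f x <> f y) -> NoDup (map f l).
Proof. intros T U Rl f l H; induction H as [|a l Ha Hl IH]; intros Hf; simpl. constructor.
  constructor. intro Hin. apply in_map_iff in Hin. destruct Hin as [y [Hy Hyl]].
  rewrite Forall_forall in Ha. apply (Hf a y); auto. left; auto. right; auto.
  apply IH. intros; apply Hf; auto; right; auto. Qed.

Lemma NoDup_FOP_map : forall (f : list bool -> R) (Rl : R -> R -> Prop) L, NoDup L ->
  (forall u v, In u L -> In v L -> u <> v -> Rl (f u) (f v)) -> ForallOrdPairs Rl (map f L).
Proof. intros f Rl L H; induction H as [|a l Ha Hl IH]; intros Hf; simpl. constructor.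
  constructor. apply Forall_forall. intros x Hx. apply in_map_iff in Hx. destruct Hx as [y [<- Hy]].
  apply Hf. left; auto. right; auto. intro; subst; contradiction.
  apply IH. intros; apply Hf; auto; right; auto. Qed.

Lemma xL_inX : forall A B N w, 2 < B -> B < A -> inX A B N (fst (interval A B N w)).
Proof. intros A B N w hB hAB n. pose proof (int_pos A B N w hB hAB).
  destruct (Nat.le_gt_cases n (length w)) as [Hle|Hgt].
  - exists (firstn n w). split. rewrite length_firstn; lia.
    apply (inI_prefix A B N (firstn n w) (skipn n w)); auto. rewrite firstn_skipn. split; lra.
  - exists (w ++ repeat false (n - length w)). split. rewrite length_app, repeat_length; lia.
    pose proof (int_pos A B N (w ++ repeat false (n - length w)) hB hAB).
    assert (E : fst (interval A B N (w ++ repeat false (n - length w))) = fst (interval A B N w)) by (rewrite int_app; apply ia_falses).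
    rewrite E. lra. Qed.

Definition Sset (A B p q : R) (N : nat -> nat) (r s : R) : R -> Prop :=
  fun v => exists cs : list R,
          (forall c, In c cs -> inX A B N c) /\
          ForallOrdPairs (fun x y => 2 * r < Rabs (x - y)) cs /\
          v = fold_right Rplus 0 (map (fun c => Rpower (mu_ball A B p q N c r) s) cs).

Lemma S_upper_el : forall A B p q N s D n0 r v, 2 < B -> B < A -> 0 < p <= 1/2 -> 0 < q <= 1/2 ->
  ell A B N (n0 + D) <= r -> r < (B - 2) / 2 * ell A B N n0 -> Sset A B p q N r s v ->
  v <= exp (Rabs s * (- INR D * ln (Rmin p q))) * exp (sk (lz p q N s) 1 (n0 + D)).
Proof. intros A B p q N s D n0 r v hB hAB hp hq H1 H2 [cs [Hin [Hfop ->]]].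
  set (n1 := (n0 + D)%nat) in *.
  set (L := - INR D * ln (Rmin p q)).
  assert (Hpi : 0 < Rmin p q <= 1/2) by (split; [apply Rmin_glb_lt; lra| pose proof (Rmin_l p q); lra]).
  assert (HL : 0 <= L).
  { unfold L. assert (ln (Rmin p q) < 0) by (rewrite <- ln_1; apply ln_increasing; lra).
    pose proof (pos_INR D). nra. }
  assert (Hell : 0 < ell A B N n1) by apply exp_pos.
  assert (Hell0 : 0 < ell A B N n0) by apply exp_pos.
  set (wc := fun c => epsilon (inhabits (@nil bool)) (fun w => length w = n1 /\ inI A B N w c)).
  assert (Hwc : forall c, In c cs -> length (wc c) = n1 /\ inI A B N (wc c) c).
  { intros c Hc. unfold wc. apply epsilon_spec. destruct (Hin c Hc n1) as [w Hw]. exists w. exact Hw. }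
  change (fold_right Rplus 0 (map (fun c => Rpower (mu_ball A B p q N c r) s) cs)) with
    (sumL (fun c => Rpower (mu_ball A B p q N c r) s) cs).
  apply Rle_trans with (sumL (fun c => exp (Rabs s * L) * Rpower (mass p q N (wc c)) s) cs).
  { apply sumL_le. intros c Hc. destruct (Hwc c Hc) as [Hl Hi].
    assert (Hmu := mu_bounds1 A B p q N c r (wc c) n0 hB hAB hp hq Hi ltac:(lia)).
    rewrite Hl in Hmu. destruct Hmu as [m1 m2]; auto. lra.
    pose proof (ln_mass_app p q N (firstn n0 (wc c)) (skipn n0 (wc c)) hp hq) as Hlm.
    rewrite firstn_skipn, length_skipn, Hl in Hlm. replace (n1 - n0)%nat with D in Hlm by (unfold n1; lia).
    fold L in Hlm.
    pose proof (mass_pos p q N (wc c) hp hq). pose proof (mass_pos p q N (firstn n0 (wc c)) hp hq).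
    assert (ln (mass p q N (wc c)) <= ln (mu_ball A B p q N c r)) by (apply ln_le_m; lra).
    assert (ln (mu_ball A B p q N c r) <= ln (mass p q N (firstn n0 (wc c)))) by (apply ln_le_m; lra).
    apply (pow_bound _ _ L s); auto; lra. }
  rewrite sumL_scal. apply Rmult_le_compat_l. apply Rlt_le, exp_pos.
  rewrite <- (sumL_map _ _ (fun w => Rpower (mass p q N w) s) wc cs).
  rewrite <- (Z_eq p q N s 1 n1 hp hq).
  apply sumL_sub.
  - apply FOP_NoDup_map with (Rl := fun x y => 2 * r < Rabs (x - y)); auto.
    intros x y Hx Hy Hxy E. destruct (Hwc x Hx) as [lx [ix1 ix2]]. destruct (Hwc y Hy) as [ly [iy1 iy2]].
    rewrite E in ix1, ix2. rewrite int_snd', ly in ix2, iy2 by lra.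
    assert (Rabs (x - y) <= ell A B N n1) by (apply Rabs_le; lra). lra.
  - apply words_NoDup.
  - intros w Hw. apply in_map_iff in Hw. destruct Hw as [c [<- Hc]]. apply words_In. apply Hwc; auto.
  - intros w. unfold Rpower. apply Rlt_le, exp_pos.
Qed.

Lemma S_lower_el : forall A B p q N s D n0 r, 2 < B -> B < A -> 0 < p <= 1/2 -> 0 < q <= 1/2 ->
  ell A B N (n0 + D) <= r -> r < (B - 2) / 2 * ell A B N n0 ->
  exists v, Sset A B p q N r s v /\
  exp (- (Rabs s * (- INR D * ln (Rmin p q)))) * exp (sk (lz p q N s) 1 n0) <= v.
Proof. intros A B p q N s D n0 r hB hAB hp hq H1 H2.
  set (L := - INR D * ln (Rmin p q)).
  assert (Hpi : 0 < Rmin p q <= 1/2) by (split; [apply Rmin_glb_lt; lra| pose proof (Rmin_l p q); lra]).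
  assert (HL : 0 <= L).
  { unfold L. assert (ln (Rmin p q) < 0) by (rewrite <- ln_1; apply ln_increasing; lra).
    pose proof (pos_INR D). nra. }
  assert (Hell : 0 < ell A B N (n0 + D)) by apply exp_pos.
  assert (Hell0 : 0 < ell A B N n0) by apply exp_pos.
  exists (sumL (fun c => Rpower (mu_ball A B p q N c r) s) (map (fun w => fst (interval A B N w)) (words n0))).
  split.
  - exists (map (fun w => fst (interval A B N w)) (words n0)). split; [|split].
    + intros c Hc. apply in_map_iff in Hc. destruct Hc as [w [<- _]]. apply xL_inX; auto.
    + apply NoDup_FOP_map. apply words_NoDup. intros u v Hu Hv Hne.
      apply words_In in Hu. apply words_In in Hv.
      assert (Hl : length u = length v) by congruence.
      destruct (int_sep A B N u v hB hAB Hl Hne) as [Hs|Hs];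
      rewrite !int_snd', ?Hl, ?Hv in Hs by lra.
      * pose proof (Rle_abs (- (fst (interval A B N u) - fst (interval A B N v)))).
        rewrite Rabs_Ropp in H. nra.
      * pose proof (Rle_abs (fst (interval A B N u) - fst (interval A B N v))). nra.
    + reflexivity.
  - rewrite sumL_map. unfold mass in *. rewrite <- (Z_eq p q N s 1 n0 hp hq), <- sumL_scal.
    apply sumL_le. intros w Hw. apply words_In in Hw.
    assert (Hmu := mu_bounds2 A B p q N r w D hB hAB hp hq).
    rewrite Hw in Hmu. destruct Hmu as [m1 m2]; auto. lra.
    pose proof (ln_mass_app p q N w (repeat false D) hp hq) as Hlm.
    rewrite repeat_length in Hlm. fold L in Hlm.
    pose proof (mass_pos p q N w hp hq). pose proof (mass_pos p q N (w ++ repeat false D) hp hq).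
    unfold mass in *.
    assert (ln (mass_aux p q N 1 (w ++ repeat false D)) <= ln (mu_ball A B p q N (fst (interval A B N w)) r)) by (apply ln_le_m; lra).
    assert (ln (mu_ball A B p q N (fst (interval A B N w)) r) <= ln (mass_aux p q N 1 w)) by (apply ln_le_m; lra).
    apply (pow_bound _ _ L s); auto; lra.
Qed.

Lemma S_core : forall A B p q N s D n0 r, 2 < B -> B < A -> 0 < p <= 1/2 -> 0 < q <= 1/2 ->
  ell A B N (n0 + D) <= r -> r < (B - 2) / 2 * ell A B N n0 ->
  exp (- (Rabs s * (- INR D * ln (Rmin p q)))) * exp (sk (lz p q N s) 1 n0) <= S_r A B p q N r s <=
  exp (Rabs s * (- INR D * ln (Rmin p q))) * exp (sk (lz p q N s) 1 (n0 + D)).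
Proof. intros. change (S_r A B p q N r s) with (Rsup (Sset A B p q N r s)). split.
  - destruct (S_lower_el A B p q N s D n0 r H H0 H1 H2 H3 H4) as [v [Hv Hle]].
    eapply Rle_trans. apply Hle. apply Rsup_ge; auto.
    eexists. intros x Hx. apply (S_upper_el A B p q N s D n0 r x); auto.
  - apply Rsup_le. exists 0. exists nil. split. intros c []. split. constructor. reflexivity.
    intros x Hx. apply (S_upper_el A B p q N s D n0 r x); auto.
Qed.
Lemma sk_lin : forall f g al be k n, sk (fun j => al * f j + be * g j) k n = al * sk f k n + be * sk g k n.
Proof. intros f g al be k n; revert k; induction n; intros k; simpl. ring. rewrite IHn; ring. Qed.

Lemma sk_zero : forall f k n, (forall j, (k <= j < k + n)%nat -> f j = 0) -> sk f k n = 0.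
Proof. intros. rewrite (sk_ext f (fun _ => 0)); auto. clear H. revert k; induction n; intros k; simpl; auto.
  rewrite IHn; ring. Qed.

Lemma sk_med : forall f g mn mx k n, (forall j, mn * g j <= f j <= mx * g j) ->
  mn * sk g k n <= sk f k n <= mx * sk g k n.
Proof. intros f g mn mx k n H; revert k; induction n; intros k; simpl. lra.
  specialize (IHn (S k)). specialize (H k). lra. Qed.

Lemma max_exists : forall (P : nat -> Prop) m, P 0%nat -> ~ P m -> exists n, P n /\ ~ P (S n).
Proof. intros P m H0; induction m; intros Hm. contradiction.
  destruct (classic (P m)) as [Hp|Hp]. exists m; auto. apply IHm; auto. Qed.

Lemma Rabs_mult_le : forall x y M K, Rabs x <= M -> Rabs y <= K -> x * y <= M * K.
Proof. intros. eapply Rle_trans. apply Rle_abs. rewrite Rabs_mult.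
  apply Rmult_le_compat; auto using Rabs_pos. Qed.

Lemma est_gen : forall lS R a b mn mx M K0 K1, 0 < R -> Rabs (lS + a) <= K0 -> Rabs (b - R) <= K1 ->
  mn * b <= a <= mx * b -> Rabs mn <= M -> Rabs mx <= M ->
  mn - (M * K1 + K0) / R <= lS / (- R) <= mx + (M * K1 + K0) / R.
Proof. intros lS R a b mn mx M K0 K1 HR H0 H1 [Ha1 Ha2] Hmn Hmx.
  assert (E : lS / (- R) = (- lS) / R) by (field; lra). rewrite E.
  pose proof (Rabs_mult_le mx (b - R) M K1 Hmx H1).
  pose proof (Rabs_mult_le (- mn) (b - R) M K1 ltac:(rewrite Rabs_Ropp; auto) H1).
  pose proof (Rle_abs (lS + a)). pose proof (Rle_abs (- (lS + a))). rewrite Rabs_Ropp in H4.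
  split.
  - apply (Rmult_le_reg_r R); auto. unfold Rdiv.
    replace ((mn - (M * K1 + K0) * / R) * R) with (mn * R - (M * K1 + K0)) by (field; lra).
    replace (- lS * / R * R) with (- lS) by (field; lra). nra.
  - apply (Rmult_le_reg_r R); auto. unfold Rdiv.
    replace ((mx + (M * K1 + K0) * / R) * R) with (mx * R + (M * K1 + K0)) by (field; lra).
    replace (- lS * / R * R) with (- lS) by (field; lra). nra.
Qed.

Lemma est_target : forall lS R a b t Q K0 K1 eps, 0 < R -> Rabs (lS + a) <= K0 -> Rabs (b - R) <= K1 ->
  Rabs (a - t * b) <= Q -> Q + Rabs t * K1 + K0 < eps * R -> Rabs (lS / (- R) - t) < eps.
Proof. intros lS R a b t Q K0 K1 eps HR H0 H1 H2 H3.
  assert (E : lS / (- R) - t = ((a - t * b) + t * (b - R) - (lS + a)) / R) by (field; lra). rewrite E.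
  unfold Rdiv. rewrite Rabs_mult, Rabs_inv, (Rabs_right R) by lra.
  apply (Rmult_lt_reg_r R); auto. rewrite Rmult_assoc, Rinv_l, Rmult_1_r by lra.
  eapply Rle_lt_trans; [|apply H3].
  eapply Rle_trans. apply Rabs_triang. eapply Rle_trans. apply Rplus_le_compat_l. rewrite Rabs_Ropp. apply Rle_refl.
  eapply Rle_trans. apply Rplus_le_compat_r. apply Rabs_triang. rewrite Rabs_mult.
  pose proof (Rabs_pos t). pose proof (Rabs_pos (b - R)).
  assert (Rabs t * Rabs (b - R) <= Rabs t * K1) by (apply Rmult_le_compat_l; auto). lra.
Qed.
Definition lzp (x s : R) : R := ln (Rpower x s + Rpower (1 - x) s).

Lemma lz_bd : forall p q N s j, Rabs (lz p q N s j) <= Rabs (lzp p s) + Rabs (lzp q s).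
Proof. intros. unfold lz. destruct (rw_cases 0 0 p q N j) as [[_ [E _]]|[_ [E _]]]; rewrite E;
  fold (lzp p s); fold (lzp q s); pose proof (Rabs_pos (lzp p s)); pose proof (Rabs_pos (lzp q s)); lra. Qed.

Lemma lr_bd : forall A B N j, 0 < B -> B < A -> ln B <= lr A B N j <= ln A.
Proof. intros. unfold lr. destruct (ratio_bd A B N j H0). split; apply ln_le_m; lra. Qed.

Lemma log_core : forall A B p q N s D n0 r, 2 < B -> B < A -> 0 < p <= 1/2 -> 0 < q <= 1/2 ->
  ell A B N (n0 + D) <= r -> r < (B - 2) / 2 * ell A B N n0 ->
  Rabs (ln (S_r A B p q N r s) - sk (lz p q N s) 1 n0) <=
     Rabs s * (- INR D * ln (Rmin p q)) + INR D * (Rabs (lzp p s) + Rabs (lzp q s)) /\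
  Rabs (sk (lr A B N) 1 n0 - - ln r) <= INR D * ln A + Rabs (ln ((B - 2) / 2)).
Proof. intros A B p q N s D n0 r hB hAB hp hq H1 H2.
  set (L := - INR D * ln (Rmin p q)).
  set (Mz := Rabs (lzp p s) + Rabs (lzp q s)).
  assert (Hpi : 0 < Rmin p q <= 1/2) by (split; [apply Rmin_glb_lt; lra| pose proof (Rmin_l p q); lra]).
  assert (HL : 0 <= L).
  { unfold L. assert (ln (Rmin p q) < 0) by (rewrite <- ln_1; apply ln_increasing; lra).
    pose proof (pos_INR D). nra. }
  assert (HMz : 0 <= Mz) by (unfold Mz; pose proof (Rabs_pos (lzp p s)); pose proof (Rabs_pos (lzp q s)); lra).
  pose proof (pos_INR D) as HD. pose proof (Rabs_pos s) as Hs.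
  destruct (S_core A B p q N s D n0 r hB hAB hp hq H1 H2) as [S1 S2]. fold L in S1, S2.
  assert (Hlo : 0 < exp (- (Rabs s * L)) * exp (sk (lz p q N s) 1 n0)) by (apply Rmult_lt_0_compat; apply exp_pos).
  split.
  - apply Rabs_le. rewrite <- exp_plus in S1, S2.
    assert (a1 : ln (exp (- (Rabs s * L) + sk (lz p q N s) 1 n0)) <= ln (S_r A B p q N r s)) by (apply ln_le_m; [apply exp_pos| lra]).
    pose proof (exp_pos (- (Rabs s * L) + sk (lz p q N s) 1 n0)).
    assert (a2 : ln (S_r A B p q N r s) <= ln (exp (Rabs s * L + sk (lz p q N s) 1 (n0 + D)))) by (apply ln_le_m; lra).
    rewrite ln_exp in a1, a2. rewrite sk_add in a2.
    destruct (sk_bounds (lz p q N s) (- Mz) Mz (1 + n0) D) as [b1 b2].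
    { intros j. pose proof (lz_bd p q N s j). fold Mz in H. pose proof (Rle_abs (lz p q N s j)) as u1. pose proof (Rle_abs (- lz p q N s j)) as u2. rewrite Rabs_Ropp in u2. unfold Mz in *. lra. }
    assert (0 <= Rabs s * L) by (apply Rmult_le_pos; auto). nra.
  - assert (HB0 : 0 < ln B) by (rewrite <- ln_1; apply ln_increasing; lra).
    assert (Hg : 0 < (B - 2) / 2) by lra.
    assert (Hr : 0 < r) by (eapply Rlt_le_trans; [apply exp_pos|apply H1]).
    assert (a1 : ln (ell A B N (n0 + D)) <= ln r) by (apply ln_le_m; auto; apply exp_pos).
    assert (a2 : ln r <= ln ((B - 2) / 2 * ell A B N n0)) by (apply ln_le_m; lra).
    unfold ell in a1, a2. rewrite ln_mult, ln_exp in a2 by (auto; apply exp_pos). rewrite ln_exp in a1.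
    rewrite sk_add in a1.
    destruct (sk_bounds (lr A B N) (ln B) (ln A) (1 + n0) D) as [b1 b2].
    { intros j. apply lr_bd; lra. }
    pose proof (Rle_abs (ln ((B - 2) / 2))). pose proof (Rle_abs (- ln ((B - 2) / 2))). rewrite Rabs_Ropp in H0.
    assert (0 <= INR D * ln A) by (apply Rmult_le_pos; auto; rewrite <- ln_1; apply ln_le_m; lra).
    apply Rabs_le. lra.
Qed.
Lemma sk_opp : forall f k n, sk (fun j => - f j) k n = - sk f k n.
Proof. intros f k n; revert k; induction n; intros k; simpl. ring. rewrite IHn; ring. Qed.

Lemma beta_mul : forall r rho s, 1 < r -> beta r rho s * ln r = - lzp rho s.
Proof. intros. unfold beta, lzp. assert (0 < ln r) by (rewrite <- ln_1; apply ln_increasing; lra).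
  field; lra. Qed.

Lemma lz_type : forall A B p q N s j, 2 < B -> B < A ->
  (- lz p q N s j = beta A p s * lr A B N j /\ typeA N j) \/
  (- lz p q N s j = beta B q s * lr A B N j /\ ~ typeA N j).
Proof. intros. unfold lz, lr. destruct (rw_cases A B p q N j) as [[E1 [E2 T]]|[E1 [E2 T]]];
  rewrite E1, E2; fold (lzp p s); fold (lzp q s); [left|right]; split; auto;
  rewrite beta_mul; lra. Qed.

Lemma lz_med : forall A B p q N s j, 2 < B -> B < A ->
  Rmin (beta A p s) (beta B q s) * lr A B N j <= - lz p q N s j <=
  Rmax (beta A p s) (beta B q s) * lr A B N j.
Proof. intros. assert (0 < lr A B N j).
  { destruct (lr_bd A B N j) as [h _]; try lra. eapply Rlt_le_trans; [|apply h]. rewrite <- ln_1; apply ln_increasing; lra. }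
  pose proof (Rmin_l (beta A p s) (beta B q s)). pose proof (Rmin_r (beta A p s) (beta B q s)).
  pose proof (Rmax_l (beta A p s) (beta B q s)). pose proof (Rmax_r (beta A p s) (beta B q s)).
  destruct (lz_type A B p q N s j H H0) as [[E _]|[E _]]; rewrite E; split; apply Rmult_le_compat_r; lra. Qed.

Lemma D_exists : forall B, 2 < B -> exists D', exp (- INR D' * ln B) <= (B - 2) / 4.
Proof. intros B hB. assert (HB0 : 0 < ln B) by (rewrite <- ln_1; apply ln_increasing; lra).
  destruct (INR_unbounded (- ln ((B - 2) / 4) / ln B)) as [n Hn]. exists n.
  rewrite <- (exp_ln ((B - 2) / 4)) by lra. apply exp_le_m.
  assert (- ln ((B - 2) / 4) < INR n * ln B).
  { apply (Rmult_lt_compat_r (ln B)) in Hn; auto. unfold Rdiv in Hn. rewrite Rmult_assoc, Rinv_l in Hn; lra. }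
  lra. Qed.

Lemma ell_0 : forall A B N, ell A B N 0 = 1.
Proof. intros; unfold ell; simpl. rewrite Ropp_0; apply exp_0. Qed.

Lemma ell_step : forall A B N n m, 0 < B -> B < A -> ell A B N (n + m) <= ell A B N n * exp (- INR m * ln B).
Proof. intros. unfold ell. rewrite sk_add, <- exp_plus. apply exp_le_m.
  destruct (sk_bounds (lr A B N) (ln B) (ln A) (1 + n) m). intros; apply lr_bd; lra. lra. Qed.

Lemma n0_exists : forall A B N D' r, 2 < B -> B < A -> exp (- INR D' * ln B) <= (B - 2) / 4 ->
  0 < r < (B - 2) / 2 ->
  exists n0, ell A B N (n0 + S D') <= r /\ r < (B - 2) / 2 * ell A B N n0.
Proof. intros A B N D' r hB hAB HD Hr.
  assert (HB0 : 0 < ln B) by (rewrite <- ln_1; apply ln_increasing; lra).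
  destruct (INR_unbounded (- ln (r / ((B - 2) / 2)) / ln B)) as [m Hm].
  destruct (max_exists (fun n => r < (B - 2) / 2 * ell A B N n) m) as [n0 [P1 P2]].
  - rewrite ell_0; lra.
  - intro H. assert (ell A B N m <= r / ((B - 2) / 2)).
    { replace m with (0 + m)%nat by lia. eapply Rle_trans. apply ell_step; lra. rewrite ell_0, Rmult_1_l.
      rewrite <- (exp_ln (r / ((B - 2) / 2))). apply exp_le_m.
      apply (Rmult_lt_compat_r (ln B)) in Hm; auto. unfold Rdiv in Hm. rewrite Rmult_assoc, Rinv_l in Hm by lra.
      simpl in Hm |- *. unfold Rdiv. lra. apply Rdiv_lt_0_compat; lra. }
    assert ((B - 2) / 2 * ell A B N m <= r).
    { apply (Rmult_le_compat_l ((B - 2) / 2)) in H0; try lra. replace ((B - 2) / 2 * (r / ((B - 2) / 2))) with r in H0 by (field; lra). auto. }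
    lra.
  - exists n0. split; auto.
    replace (n0 + S D')%nat with (S n0 + D')%nat by lia.
    eapply Rle_trans. apply ell_step; lra.
    assert (0 < ell A B N (S n0)) by apply exp_pos.
    assert (ell A B N (S n0) * exp (- INR D' * ln B) <= ell A B N (S n0) * ((B - 2) / 4)) by (apply Rmult_le_compat_l; lra).
    lra.
Qed.
Lemma gen_est : forall A B p q N s, 2 < B -> B < A -> 0 < p <= 1/2 -> 0 < q <= 1/2 ->
  forall eps, 0 < eps -> exists delta, 0 < delta /\ forall r, 0 < r < delta ->
  Rmin (beta A p s) (beta B q s) - eps < ln (S_r A B p q N r s) / ln r < Rmax (beta A p s) (beta B q s) + eps.
Proof. intros A B p q N s hB hAB hp hq eps Heps.
  destruct (D_exists B hB) as [D' HD'].
  set (D := S D').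
  set (K0 := Rabs s * (- INR D * ln (Rmin p q)) + INR D * (Rabs (lzp p s) + Rabs (lzp q s))).
  set (K1 := INR D * ln A + Rabs (ln ((B - 2) / 2))).
  set (M := Rabs (beta A p s) + Rabs (beta B q s)).
  set (E := M * K1 + K0).
  assert (Hpi : 0 < Rmin p q <= 1/2) by (split; [apply Rmin_glb_lt; lra| pose proof (Rmin_l p q); lra]).
  assert (HE : 0 <= E).
  { unfold E, K0, K1, M.
    assert (ln (Rmin p q) < 0) by (rewrite <- ln_1; apply ln_increasing; lra).
    assert (0 <= ln A) by (rewrite <- ln_1; apply ln_le_m; lra).
    pose proof (pos_INR D). pose proof (Rabs_pos s). pose proof (Rabs_pos (lzp p s)). pose proof (Rabs_pos (lzp q s)).
    pose proof (Rabs_pos (beta A p s)). pose proof (Rabs_pos (beta B q s)). pose proof (Rabs_pos (ln ((B - 2) / 2))).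
    assert (0 <= INR D * ln A) by (apply Rmult_le_pos; auto).
    assert (0 <= - INR D * ln (Rmin p q)) by nra.
    assert (0 <= Rabs s * (- INR D * ln (Rmin p q))) by (apply Rmult_le_pos; auto).
    assert (0 <= INR D * (Rabs (lzp p s) + Rabs (lzp q s))) by (apply Rmult_le_pos; lra).
    assert (0 <= (Rabs (beta A p s) + Rabs (beta B q s)) * (INR D * ln A + Rabs (ln ((B - 2) / 2)))) by (apply Rmult_le_pos; lra).
    lra. }
  exists (Rmin (Rmin 1 ((B - 2) / 2)) (exp (- ((E + 1) / eps)))). split.
  { apply Rmin_glb_lt. apply Rmin_glb_lt; lra. apply exp_pos. }
  intros r [Hr0 Hr].
  assert (Hr1 : r < 1) by (eapply Rlt_le_trans; [apply Hr|]; eapply Rle_trans; [apply Rmin_l|apply Rmin_l]).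
  assert (Hr2 : r < (B - 2) / 2) by (eapply Rlt_le_trans; [apply Hr|]; eapply Rle_trans; [apply Rmin_l|apply Rmin_r]).
  assert (Hr3 : r < exp (- ((E + 1) / eps))) by (eapply Rlt_le_trans; [apply Hr|]; apply Rmin_r).
  destruct (n0_exists A B N D' r hB hAB HD' (conj Hr0 Hr2)) as [n0 [H1 H2]].
  destruct (log_core A B p q N s D n0 r hB hAB hp hq H1 H2) as [C1 C2]. fold K0 in C1. fold D K1 in C2.
  assert (HR : 0 < - ln r) by (assert (ln r < 0) by (rewrite <- ln_1; apply ln_increasing; lra); lra).
  assert (HR2 : (E + 1) / eps < - ln r).
  { assert (ln r < ln (exp (- ((E + 1) / eps)))) by (apply ln_increasing; auto). rewrite ln_exp in H. lra. }
  assert (HER : E / (- ln r) < eps).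
  { apply (Rmult_lt_reg_r (- ln r)); auto. unfold Rdiv. rewrite Rmult_assoc, Rinv_l, Rmult_1_r by lra.
    apply (Rmult_lt_compat_l eps) in HR2; auto. unfold Rdiv in HR2. replace (eps * ((E + 1) * / eps)) with (E + 1) in HR2 by (field; lra). lra. }
  replace (ln r) with (- (- ln r)) by ring.
  assert (Hmed := sk_med (fun j => - lz p q N s j) (lr A B N) (Rmin (beta A p s) (beta B q s)) (Rmax (beta A p s) (beta B q s)) 1 n0
     (fun j => lz_med A B p q N s j hB hAB)).
  rewrite sk_opp in Hmed.
  assert (Hmn : Rabs (Rmin (beta A p s) (beta B q s)) <= M).
  { unfold M. pose proof (Rabs_pos (beta A p s)). pose proof (Rabs_pos (beta B q s)). apply Rmin_case; lra. }
  assert (Hmx : Rabs (Rmax (beta A p s) (beta B q s)) <= M).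
  { unfold M. pose proof (Rabs_pos (beta A p s)). pose proof (Rabs_pos (beta B q s)). apply Rmax_case; lra. }
  assert (Hest := est_gen (ln (S_r A B p q N r s)) (- ln r) (- sk (lz p q N s) 1 n0) (sk (lr A B N) 1 n0)
     _ _ M K0 K1 HR C1 C2 Hmed Hmn Hmx).
  fold E in Hest. lra.
Qed.
Lemma approach : forall A B p q N s t, 2 < B -> B < A -> 0 < p <= 1/2 -> 0 < q <= 1/2 ->
  (forall M, exists m n, (m <= n)%nat /\ M <= INR n /\ M * INR m <= INR n /\
     forall k, (m < k <= n)%nat -> - lz p q N s k = t * lr A B N k) ->
  forall eps, 0 < eps -> forall delta, 0 < delta -> exists r, 0 < r < delta /\
    Rabs (ln (S_r A B p q N r s) / ln r - t) < eps.
Proof. intros A B p q N s t hB hAB hp hq Hseq eps Heps delta Hdelta.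
  destruct (D_exists B hB) as [D' HD'].
  set (D := S D').
  set (K0 := Rabs s * (- INR D * ln (Rmin p q)) + INR D * (Rabs (lzp p s) + Rabs (lzp q s))).
  set (K1 := INR D * ln A + Rabs (ln ((B - 2) / 2))).
  set (Kc := Rabs (lzp p s) + Rabs (lzp q s) + Rabs t * ln A).
  assert (HB0 : 0 < ln B) by (rewrite <- ln_1; apply ln_increasing; lra).
  assert (HA0 : 0 < ln A) by (rewrite <- ln_1; apply ln_increasing; lra).
  set (g := (B - 2) / 2).
  assert (Hg : 0 < g) by (unfold g; lra).
  set (X1 := 2 * Kc / (eps * ln B)).
  set (X2 := 2 * (Rabs t * K1 + K0 + eps * K1) / (eps * ln B)).
  set (X3 := - ln (Rmin delta 1 / g) / ln B).
  destruct (Hseq (1 + Rabs X1 + Rabs X2 + Rabs X3)) as [m [n [Hmn [Hn Hm]]]].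
  destruct Hm as [Hm Hk].
  pose proof (Rle_abs X1) as a1. pose proof (Rle_abs X2) as a2. pose proof (Rle_abs X3) as a3.
  pose proof (Rabs_pos X1) as a4. pose proof (Rabs_pos X2) as a5. pose proof (Rabs_pos X3) as a6.
  pose proof (pos_INR m) as Hm0.
  assert (Hmin : 0 < Rmin delta 1) by (apply Rmin_glb_lt; lra).
  set (r := g / 2 * ell A B N n).
  assert (Hell : 0 < ell A B N n) by apply exp_pos.
  assert (Hr0 : 0 < r) by (unfold r; apply Rmult_lt_0_compat; lra).
  assert (Hen : ell A B N n <= exp (- INR n * ln B)).
  { replace n with (0 + n)%nat at 1 by lia. eapply Rle_trans. apply ell_step; lra. rewrite ell_0; lra. }
  assert (Hr1 : r < Rmin delta 1).
  { assert (exp (- INR n * ln B) < Rmin delta 1 / g).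
    { rewrite <- (exp_ln (Rmin delta 1 / g)) by (apply Rdiv_lt_0_compat; lra). apply exp_increasing.
      assert (Z5 : X3 < INR n) by lra. unfold X3 in Z5.
      apply (Rmult_lt_compat_r (ln B)) in Z5; auto. unfold Rdiv in Z5. rewrite Rmult_assoc, Rinv_l in Z5 by lra. lra. }
    unfold r. assert (Z6 : g / 2 * ell A B N n <= g / 2 * exp (- INR n * ln B)) by (apply Rmult_le_compat_l; lra).
    assert (Z7 : g / 2 * exp (- INR n * ln B) < g / 2 * (Rmin delta 1 / g)) by (apply Rmult_lt_compat_l; lra).
    replace (g / 2 * (Rmin delta 1 / g)) with (Rmin delta 1 / 2) in Z7 by (field; lra). lra. }
  assert (Hrd : r < delta) by (pose proof (Rmin_l delta 1); lra).
  assert (Hr1' : r < 1) by (pose proof (Rmin_r delta 1); lra).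
  exists r. split. lra.
  assert (G1 : ell A B N (n + D) <= r).
  { eapply Rle_trans. apply ell_step; lra. unfold r, g.
    assert (exp (- INR D * ln B) <= exp (- INR D' * ln B)) by (apply exp_le_m; unfold D; rewrite S_INR; nra).
    assert (ell A B N n * exp (- INR D * ln B) <= ell A B N n * ((B - 2) / 4)) by (apply Rmult_le_compat_l; lra).
    lra. }
  assert (G2 : r < (B - 2) / 2 * ell A B N n) by (unfold r; fold g; nra).
  destruct (log_core A B p q N s D n r hB hAB hp hq G1 G2) as [C1 C2]. fold K0 in C1. fold D K1 in C2.
  assert (HR : 0 < - ln r) by (assert (ln r < 0) by (rewrite <- ln_1; apply ln_increasing; lra); lra).
  replace (ln r) with (- (- ln r)) by ring.
  apply est_target with (a := - sk (lz p q N s) 1 n) (b := sk (lr A B N) 1 n) (Q := INR m * Kc) (K0 := K0) (K1 := K1); auto.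
  -
    assert (E : - sk (lz p q N s) 1 n - t * sk (lr A B N) 1 n =
                sk (fun j => -1 * lz p q N s j + - t * lr A B N j) 1 n) by (rewrite sk_lin; ring).
    rewrite E. replace n with (m + (n - m))%nat by lia. rewrite sk_add.
    rewrite (sk_zero _ (1 + m)). rewrite Rplus_0_r.
    destruct (sk_bounds (fun j => -1 * lz p q N s j + - t * lr A B N j) (- Kc) Kc 1 m).
    { intros j. pose proof (lz_bd p q N s j). destruct (lr_bd A B N j); try lra.
      assert (Rabs (-1 * lz p q N s j + - t * lr A B N j) <= Kc).
      { replace (-1 * lz p q N s j + - t * lr A B N j) with (- (lz p q N s j + t * lr A B N j)) by ring.
        rewrite Rabs_Ropp.
        eapply Rle_trans. apply Rabs_triang. rewrite Rabs_mult, (Rabs_right (lr A B N j)) by lra.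
        unfold Kc. pose proof (Rabs_pos t). assert (Rabs t * lr A B N j <= Rabs t * ln A) by (apply Rmult_le_compat_l; lra). lra. }
      pose proof (Rle_abs (-1 * lz p q N s j + - t * lr A B N j)) as Z8.
      pose proof (Rle_abs (- (-1 * lz p q N s j + - t * lr A B N j))) as Z9. rewrite Rabs_Ropp in Z9. lra. }
    apply Rabs_le. lra.
    intros j Hj. pose proof (Hk j ltac:(lia)). nra.
  -
    destruct (sk_bounds (lr A B N) (ln B) (ln A) 1 n) as [b1 _]. intros; apply lr_bd; lra.
    assert (Hb : sk (lr A B N) 1 n - K1 <= - ln r) by (pose proof (Rle_abs (sk (lr A B N) 1 n - - ln r)); lra).
    assert (Hx1 : X1 * INR m <= INR n).
    { eapply Rle_trans; [|apply Hm]. apply Rmult_le_compat_r; lra. }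
    assert (Hx1' : INR m * Kc <= eps * ln B / 2 * INR n).
    { unfold X1 in Hx1. apply (Rmult_le_compat_l (eps * ln B / 2)) in Hx1; [|apply Rlt_le, Rdiv_lt_0_compat; [apply Rmult_lt_0_compat|]; lra].
      replace (eps * ln B / 2 * (2 * Kc / (eps * ln B) * INR m)) with (INR m * Kc) in Hx1 by (field; lra). auto. }
    assert (Hx2 : Rabs t * K1 + K0 + eps * K1 < eps * ln B / 2 * INR n).
    { assert (Z5 : X2 < INR n) by lra. unfold X2 in Z5.
      apply (Rmult_lt_compat_l (eps * ln B / 2)) in Z5; [|apply Rdiv_lt_0_compat; [apply Rmult_lt_0_compat|]; lra].
      replace (eps * ln B / 2 * (2 * (Rabs t * K1 + K0 + eps * K1) / (eps * ln B))) with (Rabs t * K1 + K0 + eps * K1) in Z5 by (field; lra). auto. }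
    assert (eps * (sk (lr A B N) 1 n - K1) <= eps * - ln r) by (apply Rmult_le_compat_l; lra).
    assert (eps * (INR n * ln B) <= eps * sk (lr A B N) 1 n) by (apply Rmult_le_compat_l; lra).
    nra.
Qed.
Lemma N_mono : forall (N : nat -> nat), (forall i, (N i < N (S i))%nat) ->
  forall i j, (i <= j)%nat -> (N i <= N j)%nat.
Proof. intros N H i j Hij; induction Hij. lia. specialize (H m). lia. Qed.

Lemma N_ge : forall (N : nat -> nat), (forall i, (N i < N (S i))%nat) -> forall i, (i <= N i)%nat.
Proof. intros N H i; induction i. lia. specialize (H i). lia. Qed.

Lemma seq_gen : forall (N : nat -> nat) (P : nat -> Prop),
  (forall i, (N i < N (S i))%nat) -> cv_infty (fun i : nat => INR (N (S i)) / INR (N i)) ->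
  (forall I, exists i, (I <= i)%nat /\ P i) ->
  forall M, exists i, P i /\ M <= INR (N (S i)) /\ M * INR (N i) <= INR (N (S i)).
Proof. intros N P Hinc Hg HP M.
  destruct (Hg M) as [I HI]. destruct (INR_unbounded M) as [c Hc].
  destruct (HP (I + c + 1)%nat) as [i [Hi Pi]]. exists i. split; auto.
  pose proof (N_ge N Hinc (S i)). pose proof (N_ge N Hinc i).
  split.
  - apply Rlt_le. eapply Rlt_le_trans. apply Hc. apply le_INR. lia.
  - specialize (HI i ltac:(lia)). assert (0 < INR (N i)) by (apply lt_0_INR; lia).
    apply (Rmult_lt_compat_r (INR (N i))) in HI; auto. unfold Rdiv in HI.
    rewrite Rmult_assoc, Rinv_l, Rmult_1_r in HI by lra. lra.
Qed.

Lemma seqA : forall A B p q N s, 2 < B -> B < A ->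
  (forall i, (N i < N (S i))%nat) -> cv_infty (fun i : nat => INR (N (S i)) / INR (N i)) ->
  forall M, exists m n, (m <= n)%nat /\ M <= INR n /\ M * INR m <= INR n /\
     forall k, (m < k <= n)%nat -> - lz p q N s k = beta A p s * lr A B N k.
Proof. intros A B p q N s hB hAB Hinc Hg M.
  destruct (seq_gen N (fun i => exists j, i = (2 * j)%nat) Hinc Hg) with (M := M) as [i [[j ->] [H1 H2]]].
  { intros I. exists (2 * I)%nat. split. lia. exists I; auto. }
  exists (N (2 * j)%nat), (N (S (2 * j))). split. pose proof (Hinc (2 * j)%nat); lia. split; auto. split; auto.
  intros k Hk. destruct (lz_type A B p q N s k hB hAB) as [[E _]|[_ T]]; auto.
  exfalso; apply T. exists j. replace (2 * j + 1)%nat with (S (2 * j)) by lia. lia.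
Qed.

Lemma seqB : forall A B p q N s, 2 < B -> B < A ->
  (forall i, (N i < N (S i))%nat) -> cv_infty (fun i : nat => INR (N (S i)) / INR (N i)) ->
  forall M, exists m n, (m <= n)%nat /\ M <= INR n /\ M * INR m <= INR n /\
     forall k, (m < k <= n)%nat -> - lz p q N s k = beta B q s * lr A B N k.
Proof. intros A B p q N s hB hAB Hinc Hg M.
  destruct (seq_gen N (fun i => exists j, i = (2 * j + 1)%nat) Hinc Hg) with (M := M) as [i [[j ->] [H1 H2]]].
  { intros I. exists (2 * I + 1)%nat. split. lia. exists I; auto. }
  exists (N (2 * j + 1)%nat), (N (S (2 * j + 1))). split. pose proof (Hinc (2 * j + 1)%nat); lia. split; auto. split; auto.
  intros k Hk. destruct (lz_type A B p q N s k hB hAB) as [[_ T]|[E _]]; auto.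
  exfalso. destruct T as [j' Hj'].
  destruct (Nat.le_gt_cases j' j).
  - pose proof (N_mono N Hinc (2 * j' + 1) (2 * j + 1) ltac:(lia)). lia.
  - pose proof (N_mono N Hinc (S (2 * j + 1)) (2 * j') ltac:(lia)). lia.
Qed.

Theorem mainTheorem8 (A B p q : R) (N : nat -> nat)
  (hAB : B < A) (hB : 2 < B)
  (hp : 0 < p <= 1 / 2) (hq : 0 < q <= 1 / 2)
  (hN0 : N 0%nat = 0%nat)
  (hNinc : forall i : nat, (N i < N (S i))%nat)
  (hNgrowth : cv_infty (fun i : nat => INR (N (S i)) / INR (N i)))
  (hstand : - ln p / ln A < - ln (1 - q) / ln B) :
  forall s : R,
    is_liminf0 (fun r => ln (S_r A B p q N r s) / ln r)
      (Rmin (beta A p s) (beta B q s)) /\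
    is_limsup0 (fun r => ln (S_r A B p q N r s) / ln r)
      (Rmax (beta A p s) (beta B q s)).
Proof.
  intros s.
  assert (hp' : 0 < p <= 1/2) by lra. assert (hq' : 0 < q <= 1/2) by lra.
  pose proof (gen_est A B p q N s hB hAB hp' hq') as G.
  pose proof (approach A B p q N s (beta A p s) hB hAB hp' hq' (seqA A B p q N s hB hAB hNinc hNgrowth)) as PA.
  pose proof (approach A B p q N s (beta B q s) hB hAB hp' hq' (seqB A B p q N s hB hAB hNinc hNgrowth)) as PB.
  split; split.
  - intros eps Heps. destruct (G eps Heps) as [d [Hd H]]. exists d. split; auto.
    intros r Hr. specialize (H r Hr). lra.
  - intros eps Heps d Hd.
    destruct (Rle_dec (beta A p s) (beta B q s)) as [Hle|Hle].
    + rewrite Rmin_left by auto. destruct (PA eps Heps d Hd) as [r [Hr H]]. exists r; split; auto.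
      pose proof (Rle_abs (ln (S_r A B p q N r s) / ln r - beta A p s)). lra.
    + rewrite Rmin_right by lra. destruct (PB eps Heps d Hd) as [r [Hr H]]. exists r; split; auto.
      pose proof (Rle_abs (ln (S_r A B p q N r s) / ln r - beta B q s)). lra.
  - intros eps Heps. destruct (G eps Heps) as [d [Hd H]]. exists d. split; auto.
    intros r Hr. specialize (H r Hr). lra.
  - intros eps Heps d Hd.
    destruct (Rle_dec (beta A p s) (beta B q s)) as [Hle|Hle].
    + rewrite Rmax_right by auto. destruct (PB eps Heps d Hd) as [r [Hr H]]. exists r; split; auto.
      pose proof (Rle_abs (- (ln (S_r A B p q N r s) / ln r - beta B q s))). rewrite Rabs_Ropp in H0. lra.
    + rewrite Rmax_left by lra. destruct (PA eps Heps d Hd) as [r [Hr H]]. exists r; split; auto.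
      pose proof (Rle_abs (- (ln (S_r A B p q N r s) / ln r - beta A p s))). rewrite Rabs_Ropp in H0. lra.
Qed.
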